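(* Let $G$ be an undirected graph on $n$ vertices with nonnegative edge weights, let $0<\epsilon<1$, and let $\widehat{G}$ be an $\epsilon$-spectral sparsifier of $G$. Let $\mu_1\geq\cdots\geq\mu_n$ be the eigenvalues of $L_G$ with respective eigenvectors $x_1,\dots,x_n$, and let $\widehat{\mu}_1\geq\cdots\geq\widehat{\mu}_n$ be the eigenvalues of $L_{\widehat{G}}$ with respective eigenvectors $\widehat{x}_1,\dots,\widehat{x}_n$. Then 1. $\|L_G-L_{\widehat{G}}\|\leq\epsilon\,\rho(L_G)$, and 2. if $\theta_i$ is the angle between $x_i$ and $\widehat{x}_i$, then \[ \sin\theta_i\leq\frac{\epsilon\,\rho(L_G)}{\min\{|\mu_i-\widehat{\mu}_{i-1}|,\ |\mu_i-\widehat{\mu}_{i+1}|\}}, \] where it is assumed that $|\mu_i-\widehat{\mu}_{i\pm1}|\neq 0$ for all $i=1,\dots,n$.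
   Context: For a simple undirected graph $G$ on vertices $v_1,\dots,v_n$ with edge weights $w_{ij}\geq 0$ (and $w_{ij}=0$ for non-edges), the adjacency matrix is $(A_G)_{ij}=w_{ij}$ for $i\neq j$, $(A_G)_{ii}=0$; the degree matrix $D_G$ is diagonal with $(D_G)_{ii}=\sum_j w_{ij}$; the Laplacian is $L_G=D_G-A_G$. For $\epsilon\in(0,1)$, a weighted graph $\widehat{G}$ on the same vertex set is an $\epsilon$-spectral sparsifier of $G$ if $(1-\epsilon)x^TL_Gx\leq x^TL_{\widehat{G}}x\leq(1+\epsilon)x^TL_Gx$ for all $x\in\mathbb{R}^n$. $\|\cdot\|$ is the spectral (2-)norm and $\rho(\cdot)$ the spectral radius. For the boundary indices the conventions $\widehat{\mu}_0=+\infty$, $\widehat{\mu}_{n+1}=-\infty$ are used. *)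

(* Defs.v *)
From HB Require Import structures.
From mathcomp Require Import all_boot all_order all_algebra.
From mathcomp Require Import all_classical all_reals all_analysis.
Set Implicit Arguments. Unset Strict Implicit. Unset Printing Implicit Defensive.
Import Order.TTheory GRing.Theory Num.Theory.
Local Open Scope ring_scope.
Local Open Scope classical_set_scope.

Section Defs.
Variables (R : realType) (n : nat).

(* A weighted simple undirected graph on vertices 'I_n, given by its weight
   matrix w (w i j = weight of edge {i,j}, 0 for non-edges). *)
Definition weight_graph (w : 'M[R]_n) : Prop :=
  [/\ w^T = w, forall i, w i i = 0 & forall i j, 0 <= w i j].

Definition adjacency (w : 'M[R]_n) : 'M[R]_n := \matrix_(i, j) (if i == j then 0 else w i j).
Definition degree (w : 'M[R]_n) : 'M[R]_n := diag_mx (\row_i \sum_j w i j).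
Definition laplacian (w : 'M[R]_n) : 'M[R]_n := degree w - adjacency w.

Definition qform (A : 'M[R]_n) (x : 'cV[R]_n) : R := (x^T *m A *m x) 0 0.
Definition dotv (x y : 'cV[R]_n) : R := (x^T *m y) 0 0.
Definition normv (x : 'cV[R]_n) : R := Num.sqrt (dotv x x).

Definition spectral_sparsifier (eps : R) (w wh : 'M[R]_n) : Prop :=
  forall x : 'cV[R]_n,
    (1 - eps) * qform (laplacian w) x <= qform (laplacian wh) x /\
    qform (laplacian wh) x <= (1 + eps) * qform (laplacian w) x.

Definition spec_norm (A : 'M[R]_n) : R :=
  sup [set normv (A *m x) | x in [set x : 'cV[R]_n | normv x = 1]].

(* spectral radius: largest modulus of an eigenvalue (for the symmetric
   matrices considered here all eigenvalues are real) *)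
Definition spec_radius (A : 'M[R]_n) : R :=
  sup [set `|a| | a in [set a : R | eigenvalue A a]].

Definition vangle (x y : 'cV[R]_n) : R := acos (dotv x y / (normv x * normv y)).

Definition sorted_spectrum (A : 'M[R]_n) (mu : 'I_n -> R) : Prop :=
  (forall i j : 'I_n, (i <= j)%N -> mu j <= mu i) /\
  char_poly A = \prod_(i < n) ('X - (mu i)%:P).

(* 1-based extension with mu_0 = +oo and mu_{n+1} = -oo *)
Definition ext_eig (mu : 'I_n -> R) (k : nat) : \bar R :=
  if k == 0%N then +oo%E
  else if @insub _ (fun m => (m < n)%N) 'I_n k.-1 is Some i then (mu i)%:E
  else -oo%E.

End Defs.

(* Main.v *)
Require Import Defs.
From HB Require Import structures.
From mathcomp Require Import all_boot all_order all_algebra.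
From mathcomp Require Import complex ring lra zify.
Import Order.TTheory GRing.Theory Num.Theory.
Local Open Scope ring_scope.

Set Implicit Arguments. Unset Strict Implicit. Unset Printing Implicit Defensive.

Lemma char_poly_sim (F : comNzRingType) n (Q P D : 'M[F]_n) :
  Q *m P = 1%:M -> char_poly (Q *m D *m P) = char_poly D.
Proof.
move=> QP.
have QP' : map_mx polyC Q *m map_mx polyC P = 1%:M by rewrite -map_mxM QP map_mx1.
have e : char_poly_mx (Q *m D *m P) =
    map_mx polyC Q *m char_poly_mx D *m map_mx polyC P.
  rewrite /char_poly_mx !map_mxM mulmxBr mulmxBl mul_mx_scalar -scalemxAl QP'.
  by rewrite scalemx1.
rewrite /char_poly e !det_mulmx mulrC mulrA -det_mulmx mulmx1C //.
by rewrite det1 mul1r.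
Qed.

Lemma exists_ker (F : fieldType) m n (M : 'M[F]_(m,n)) : (\rank M < n)%N ->
  exists2 z : 'cV_n, z != 0 & M *m z = 0.
Proof.
move=> rk.
have : kermx M^T != 0.
  by rewrite -mxrank_eq0 mxrank_ker mxrank_tr -lt0n subn_gt0.
case: (boolP [exists i, row i (kermx M^T) != 0]) => [/existsP[i ri]|nex].
  exists (row i (kermx M^T))^T; first by rewrite trmx_eq0.
  apply: trmx_inj; rewrite trmx_mul trmxK trmx0 -row_mul mulmx_ker.
  by apply/rowP => j; rewrite !mxE.
move=> Kn0; exfalso; move/negP: Kn0; apply.
move: nex; rewrite negb_exists => /forallP H.
apply/eqP/row_matrixP => i; move/negPn/eqP: (H i) => ->.
by apply/rowP => j; rewrite !mxE.
Qed.

Lemma card_count (T: finType) (P : pred T) : #|[set x | P x]| = count P (enum T).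
Proof. by rewrite enumT cardsE cardE /enum_mem size_filter. Qed.
Lemma card_count_map (T: finType) (U : eqType) (f : T -> U) (P : pred U) :
  #|[set x | P (f x)]| = count P (map f (enum T)).
Proof. by rewrite count_map card_count. Qed.

Section Spec.
Variable R : rcfType.
Local Notation C := (complex R).
Local Notation toC := (real_complex R).
Local Notation mc M := (map_mx toC M).

Definition ct m n (M : 'M[C]_(m,n)) : 'M[C]_(n,m) := (map_mx Num.conj M)^T.

Lemma ctM m n p (A : 'M[C]_(m,n)) (B : 'M_(n,p)) : ct (A *m B) = ct B *m ct A.
Proof. by rewrite /ct map_mxM trmx_mul. Qed.

Lemma conj_toC (r : R) : Num.conj (toC r) = toC r.
Proof. exact: conjc_real. Qed.

Lemma ct_real m n (M : 'M[R]_(m,n)) : ct (mc M) = mc (M^T).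
Proof. by apply/matrixP => i j; rewrite !mxE conj_toC. Qed.

Definition decomp n (A : 'M[R]_n) (U : 'M[C]_n) (d : 'I_n -> R) :=
  [/\ U *m ct U = 1%:M, ct U *m U = 1%:M &
      mc A = ct U *m diag_mx (\row_k toC (d k)) *m U].

Lemma decompP n (A : 'M[R]_n) : A^T = A -> exists U d, decomp A U d.
Proof.
move=> symA.
have herm : mc A \is hermsymmx.
  apply/is_hermitianmxP; rewrite expr0 scale1r.
  apply/matrixP => i j; rewrite !mxE conj_toC.
  by rewrite -[in LHS]symA mxE.
have /orthomx_spectralP eA := hermitian_normalmx herm.
have Pu := spectral_unitarymx (mc A).
have real := hermitian_spectral_diag_real herm.
set P := spectralmx _ in eA Pu; set sp := spectral_diag _ in eA real.
have PctP : P *m ct P = 1%:M by rewrite /ct map_trmx; apply/unitarymxP.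
exists P, (fun k => complex.Re (sp 0 k)); split => //.
  exact: mulmx1C.
rewrite {1}eA invmx_unitary // /ct -map_trmx; congr (_ *m diag_mx _ *m _).
apply/rowP => k; rewrite !mxE RRe_real //.
by move/mxOverP : real; apply.
Qed.

Lemma decomp_char n (A : 'M[R]_n) U d : decomp A U d ->
  char_poly A = \prod_(k < n) ('X - (d k)%:P).
Proof.
case=> _ UU eA.
apply: (@map_poly_inj _ _ toC).
rewrite map_char_poly eA char_poly_sim // char_poly_trig ?diag_mx_is_trig //.
rewrite rmorph_prod; apply: eq_bigr => k _.
by rewrite !mxE eqxx mulr1n /= map_polyXsubC.
Qed.

Definition nsq (c : C) := Num.conj c * c.
Definition qf n (M : 'M[C]_n) (z : 'cV[C]_n) := (ct z *m M *m z) 0 0.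
Definition ip n (z1 z2 : 'cV[C]_n) := (ct z1 *m z2) 0 0.

Lemma nsq_ge0 c : 0 <= nsq c.
Proof. by rewrite /nsq mulrC mul_conjC_ge0. Qed.

Lemma nsq_eq0 c : (nsq c == 0) = (c == 0).
Proof. by rewrite /nsq mulrC mul_conjC_eq0. Qed.

Lemma nsq_toCM (r : R) c : nsq (toC r * c) = toC r ^+ 2 * nsq c.
Proof. by rewrite /nsq rmorphM /= conj_toC; ring. Qed.

Lemma ip_sum n (y1 y2 : 'cV[C]_n) : ip y1 y2 = \sum_k Num.conj (y1 k 0) * y2 k 0.
Proof. by rewrite /ip mxE; apply: eq_bigr => k _; rewrite !mxE. Qed.

Lemma diag_form n (d : 'I_n -> C) (y : 'cV[C]_n) :
  qf (diag_mx (\row_k d k)) y = \sum_k d k * nsq (y k 0).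
Proof.
rewrite /qf mul_mx_diag mxE; apply: eq_bigr => k _.
by rewrite !mxE /nsq mulrCA mulrA.
Qed.

Lemma decomp_ip n (A : 'M[R]_n) U d z1 z2 : decomp A U d ->
  ip z1 z2 = ip (U *m z1) (U *m z2).
Proof. by case=> _ UU _; rewrite /ip ctM -mulmxA (mulmxA (ct U)) UU mul1mx. Qed.

Lemma decomp_qf n (A : 'M[R]_n) U d z : decomp A U d ->
  qf (mc A) z = \sum_k toC (d k) * nsq ((U *m z) k 0).
Proof.
case=> _ _ eA; rewrite -diag_form /qf eA ctM !mulmxA.
by rewrite -[ct z *m ct U *m _ *m U *m z]mulmxA.
Qed.

Lemma decomp_sub n (A : 'M[R]_n) U d c : decomp A U d ->
  decomp (A - c%:M) U (fun k => d k - c).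
Proof.
case=> UU UU' eA; split => //.
rewrite map_mxB eA map_scalar_mx /=.
have -> : (toC c)%:M = ct U *m (toC c)%:M *m U :> 'M[C]_n.
  by rewrite mul_mx_scalar -scalemxAl UU' scalemx1.
rewrite -mulmxBl -mulmxBr; congr (_ *m _ *m _).
apply/matrixP => i j; rewrite !mxE; case: eqP => _ /=; rewrite ?mulr1n ?mulr0n ?subr0 //.
by rewrite rmorphB.
Qed.

Lemma decomp_norm2 n (A : 'M[R]_n) U d z : decomp A U d ->
  ip (mc A *m z) (mc A *m z) = \sum_k toC (d k) ^+ 2 * nsq ((U *m z) k 0).
Proof.
move=> dA; have [UU UU' eA] := dA.
rewrite (decomp_ip _ _ dA) eA !mulmxA UU mul1mx -mulmxA ip_sum.
apply: eq_bigr => k _; rewrite mul_diag_mx !mxE.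
exact: nsq_toCM.
Qed.

Lemma decomp_eig n (A : 'M[R]_n) U d (z : 'cV[C]_n) a : decomp A U d ->
  mc A *m z = a *: z -> forall k, (toC (d k) - a) * (U *m z) k 0 = 0.
Proof.
move=> [UU UU' eA] ez k.
have : U *m (mc A *m z) = U *m (a *: z) by rewrite ez.
rewrite eA !mulmxA UU mul1mx -mulmxA -scalemxAr => /matrixP /(_ k 0).
rewrite mul_diag_mx !mxE => e.
by rewrite mulrBl e subrr.
Qed.

Lemma sub_rows_zero n (U : 'M[C]_n) (S : {set 'I_n}) (z : 'cV[C]_n) :
  (\matrix_(j < #|S|, l < n) U (enum_val j) l) *m z = 0 ->
  forall k, k \in S -> (U *m z) k 0 = 0.
Proof.
move=> /matrixP H k kS; have := H (enum_rank_in kS k) 0.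
rewrite !mxE; under eq_bigr do rewrite mxE enum_rankK_in //; done.
Qed.

Lemma weyl_count n (A B : 'M[R]_n) U d V e (delta t : R) :
  decomp A U d -> decomp B V e ->
  (forall z : 'cV[C]_n, qf (mc A) z - qf (mc B) z <= toC delta * ip z z) ->
  (#|[set k | (t <= d k)%R]| + #|[set k | (e k < t - delta)%R]| <= n)%N.
Proof.
move=> dA dB H; rewrite leqNgt; apply/negP => Hlt.
set Kc := [set k | d k < t]; set Kc' := [set k | t - delta <= e k].
have cK : (#|Kc| + #|Kc'| < n)%N.
  have h1 : #|Kc| = (n - #|[set k | (t <= d k)%R]|)%N.
    rewrite cardsCs card_ord; congr (n - _)%N; apply: eq_card => k.
    by rewrite !inE -leNgt.
  have h2 : #|Kc'| = (n - #|[set k | (e k < t - delta)%R]|)%N.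
    rewrite cardsCs card_ord; congr (n - _)%N; apply: eq_card => k.
    by rewrite !inE -ltNge.
  rewrite h1 h2.
  have := max_card [set k | t <= d k]; have := max_card [set k | e k < t - delta].
  rewrite !card_ord; lia.
pose M1 := \matrix_(j < #|Kc|, l < n) U (enum_val j) l.
pose M2 := \matrix_(j < #|Kc'|, l < n) V (enum_val j) l.
have [z z0 Mz] : exists2 z : 'cV_n, z != 0 & col_mx M1 M2 *m z = 0.
  by apply: exists_ker; apply: leq_ltn_trans cK; apply: rank_leq_row.
move: Mz; rewrite mul_col_mx => /eqP; rewrite col_mx_eq0 => /andP[/eqP M1z /eqP M2z].
have y0 := sub_rows_zero M1z; have w0 := sub_rows_zero M2z.
have eU : ip z z = \sum_k nsq ((U *m z) k 0) by rewrite (decomp_ip _ _ dA) ip_sum.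
have eV : ip z z = \sum_k nsq ((V *m z) k 0) by rewrite (decomp_ip _ _ dB) ip_sum.
have h1 : toC t * ip z z <= \sum_k toC (d k) * nsq ((U *m z) k 0).
  rewrite eU mulr_sumr; apply: ler_sum => k _.
  case: (boolP (k \in Kc)) => kK.
    by rewrite y0 // /nsq !mulr0.
  apply: ler_wpM2r; first exact: nsq_ge0.
  by rewrite lecR; move: kK; rewrite inE -leNgt.
have h2 : \sum_k (toC (t - delta) - toC (e k)) * nsq ((V *m z) k 0) <= 0.
  have := H z; rewrite (decomp_qf _ dA) (decomp_qf _ dB) => H'.
  have -> : \sum_k (toC (t - delta) - toC (e k)) * nsq ((V *m z) k 0) =
     (toC t * ip z z - \sum_k toC (d k) * nsq ((U *m z) k 0)) +
     ((\sum_k toC (d k) * nsq ((U *m z) k 0) - \sum_k toC (e k) * nsq ((V *m z) k 0))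
       - toC delta * ip z z).
    rewrite [in RHS]eV; under eq_bigr do rewrite mulrBl.
    rewrite sumrB -mulr_sumr rmorphB /=; ring.
  have a1 : toC t * ip z z - \sum_k toC (d k) * nsq ((U *m z) k 0) <= 0.
    by rewrite subr_le0.
  have a2 : (\sum_k toC (d k) * nsq ((U *m z) k 0) - \sum_k toC (e k) * nsq ((V *m z) k 0))
       - toC delta * ip z z <= 0 by rewrite subr_le0.
  by have := lerD a1 a2; rewrite addr0.
have tge : forall k, 0 <= (toC (t - delta) - toC (e k)) * nsq ((V *m z) k 0).
  move=> k; case: (boolP (k \in Kc')) => kK.
    by rewrite w0 // /nsq !mulr0.
  apply: mulr_ge0; last exact: nsq_ge0.
  by rewrite subr_ge0 lecR; move: kK; rewrite inE -ltNge => /ltW.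
have s0 : \sum_k (toC (t - delta) - toC (e k)) * nsq ((V *m z) k 0) = 0.
  by apply/le_anti; rewrite h2 sumr_ge0.
have wz : V *m z = 0.
  apply/matrixP => k j; rewrite ord1 [in RHS]mxE.
  case: (boolP (k \in Kc')) => kK; first exact: w0.
  have := @psumr_eq0P _ _ xpredT _ (fun k _ => tge k) s0 k isT.
  move/eqP; rewrite mulf_eq0 nsq_eq0 => /orP[|/eqP //].
  rewrite subr_eq0 => /eqP/complexI et; move: kK; rewrite inE et lexx.
  by [].
case: dB => _ VV _.
move/negP: z0; apply; apply/eqP.
by rewrite -[z]mul1mx -VV -mulmxA wz mulmx0.
Qed.

Definition sorted_desc n (mu : 'I_n -> R) := forall i j : 'I_n, (i <= j)%N -> mu j <= mu i.

Lemma perm_decomp n (A : 'M[R]_n) U d (alpha : 'I_n -> R) : decomp A U d ->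
  char_poly A = \prod_(k < n) ('X - (alpha k)%:P) ->
  perm_eq (map d (enum 'I_n)) (map alpha (enum 'I_n)).
Proof.
move=> dA cA; apply: prod_XsubC_eq; rewrite !big_map.
have e : \prod_(k < n) ('X - (d k)%:P) = \prod_(k < n) ('X - (alpha k)%:P).
  by rewrite -(decomp_char dA).
exact: e.
Qed.

Lemma card_split n (j : 'I_n) :
  (#|[set k : 'I_n | (k <= j)%N]| + #|[set k : 'I_n | (j <= k)%N]| = n.+1)%N.
Proof.
rewrite -cardsUI.
have -> : [set k : 'I_n | (k <= j)%N] :|: [set k : 'I_n | (j <= k)%N] = setT.
  by apply/setP => k; rewrite !inE leq_total.
have -> : [set k : 'I_n | (k <= j)%N] :&: [set k : 'I_n | (j <= k)%N] = [set j].
  apply/setP => k; rewrite !inE -eqn_leq; apply/eqP/eqP => [/val_inj|->] //.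
by rewrite cardsT cards1 card_ord addn1.
Qed.

Lemma weyl n (A B : 'M[R]_n) U d V e (alpha beta : 'I_n -> R) delta :
  decomp A U d -> decomp B V e ->
  (forall z, qf (mc A) z - qf (mc B) z <= toC delta * ip z z) ->
  sorted_desc alpha -> sorted_desc beta ->
  char_poly A = \prod_(k < n) ('X - (alpha k)%:P) ->
  char_poly B = \prod_(k < n) ('X - (beta k)%:P) ->
  forall j, alpha j - delta <= beta j.
Proof.
move=> dA dB H sa sb cA cB j; rewrite leNgt; apply/negP => bj.
have := weyl_count (alpha j) dA dB H.
rewrite (card_count_map d (fun x => alpha j <= x)) (card_count_map e (fun x => x < alpha j - delta)).
rewrite (permP (perm_decomp dA cA)) (permP (perm_decomp dB cB)).
rewrite -(card_count_map alpha (fun x => alpha j <= x)) -(card_count_map beta (fun x => x < alpha j - delta)).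
have s1 : [set k : 'I_n | (k <= j)%N] \subset [set k | (alpha j <= alpha k)%R].
  by apply/subsetP => k; rewrite !inE => /sa.
have s2 : [set k : 'I_n | (j <= k)%N] \subset [set k | (beta k < alpha j - delta)%R].
  by apply/subsetP => k; rewrite !inE => /sb kj; apply: le_lt_trans kj bj.
have := subset_leq_card s1; have := subset_leq_card s2; have := card_split j.
lia.
Qed.

Lemma nsq_conjM a b : nsq (Num.conj a * b) = nsq a * nsq b.
Proof. by rewrite /nsq rmorphM /= conjCK; ring. Qed.

Lemma dk_core n (B : 'M[R]_n) V e (beta : 'I_n -> R) (i : 'I_n)
    (Lc : 'M[C]_n) (z zh : 'cV[C]_n) (mu delta g : R) :
  decomp B V e -> char_poly B = \prod_(k < n) ('X - (beta k)%:P) ->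
  Lc *m z = toC mu *: z ->
  mc B *m zh = toC (beta i) *: zh ->
  ip ((mc B - Lc) *m z) ((mc B - Lc) *m z) <= toC (delta ^+ 2) * ip z z ->
  0 <= delta -> delta < g ->
  (forall k, k != i -> g <= `|beta k - mu|) -> `|beta i - mu| <= delta ->
  toC (g ^+ 2 - delta ^+ 2) * ip z z * ip zh zh <= toC (g ^+ 2) * nsq (ip z zh) /\
  nsq (ip z zh) <= ip z z * ip zh zh.
Proof.
move=> dB cB ez ezh hE d0 dg gk gi.
have bne : forall k, k != i -> beta k != beta i.
  move=> k ki; apply/negP => /eqP bk; have := gk k ki; rewrite bk => h.
  by have := lt_le_trans dg h; rewrite ltNge gi.
have [k0 K0] : exists k0, [set k | e k == beta i] = [set k0].
  apply/cards1P.
  rewrite (card_count_map e (pred1 (beta i))) (permP (perm_decomp dB cB)).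
  rewrite -(card_count_map beta (pred1 (beta i))).
  have -> : [set x | pred1 (beta i) (beta x)] = [set i].
    apply/setP => k; rewrite !inE /=; apply/idP/idP => [|/eqP -> //].
    by apply: contraLR => /bne.
  by rewrite cards1.
have ek : forall k, (e k == beta i) = (k == k0).
  by move=> k; have := congr1 (fun S : {set 'I_n} => k \in S) K0; rewrite /= !inE.
have [VV VV' eB] := dB.
set w := V *m z; set w' := V *m zh.
have w'0 : forall k, k != k0 -> w' k 0 = 0.
  move=> k kk; have := decomp_eig dB ezh k; move/eqP; rewrite mulf_eq0 => /orP[|/eqP //].
  rewrite subr_eq0 => /eqP/complexI ek'; exfalso; move: kk; rewrite -ek ek' eqxx.
  by [].
have hN : ip z z = nsq (w k0 0) + \sum_(k | k != k0) nsq (w k 0).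
  by rewrite (decomp_ip _ _ dB) ip_sum (bigD1 k0).
have hNh : ip zh zh = nsq (w' k0 0).
  rewrite (decomp_ip _ _ dB) ip_sum (bigD1 k0) //= big1 ?addr0 //.
  by move=> k kk; rewrite w'0 // mulr0.
have hI : ip z zh = Num.conj (w k0 0) * w' k0 0.
  rewrite (decomp_ip _ _ dB) ip_sum (bigD1 k0) //= big1 ?addr0 //.
  by move=> k kk; rewrite w'0 // mulr0.
have hE' : \sum_k toC (e k - mu) ^+ 2 * nsq (w k 0) <= toC (delta ^+ 2) * ip z z.
  rewrite -(decomp_norm2 _ (decomp_sub mu dB)).
  suff -> : mc (B - mu%:M) *m z = (mc B - Lc) *m z by [].
  by rewrite map_mxB map_scalar_mx /= !mulmxBl mul_scalar_mx ez.
have gek : forall k, k != k0 -> toC (g ^+ 2) <= toC (e k - mu) ^+ 2.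
  move=> k kk.
  have : e k \in map beta (enum 'I_n).
    by rewrite -(perm_mem (perm_decomp dB cB)); apply: map_f; rewrite mem_enum.
  case/mapP => j _ ej.
  have ji : j != i by apply: contra kk => /eqP ji; rewrite -ek ej ji.
  have g0 : 0 <= g by apply: le_trans (ltW dg).
  rewrite -rmorphXn lecR ej -[(beta j - mu)^+2]real_normK ?num_real // !expr2.
  by apply: ler_pM => //; apply: gk.
set a := nsq (w k0 0); set S := \sum_(k | k != k0) nsq (w k 0).
have S0 : 0 <= S by apply: sumr_ge0 => k _; exact: nsq_ge0.
have gS : toC (g ^+ 2) * S <= toC (delta ^+ 2) * ip z z.
  apply: le_trans; last exact: hE'.
  rewrite (bigD1 k0) //=.
  rewrite addrC; apply: (@le_trans _ _ (\sum_(k | k != k0) toC (e k - mu) ^+ 2 * nsq (w k 0))).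
    rewrite /S mulr_sumr; apply: ler_sum => k kk.
    by apply: ler_wpM2r; [exact: nsq_ge0 | exact: gek].
  rewrite lerDl; apply: mulr_ge0; last exact: nsq_ge0.
  by rewrite -rmorphXn ler0c; exact: sqr_ge0.
have Nh0 : 0 <= ip zh zh by rewrite hNh; exact: nsq_ge0.
rewrite hI nsq_conjM -/a -hNh; split; last first.
  by rewrite hN; apply: ler_wpM2r => //; rewrite lerDl.
rewrite mulrA; apply: ler_wpM2r => //.
rewrite rmorphB /= mulrBl hN mulrDr.
by rewrite -hN -addrA gerDl subr_le0; exact: gS.
Qed.

Lemma qf_real n (A : 'M[R]_n) (x : 'cV[R]_n) :
  qf (mc A) (mc x) = toC ((x^T *m A *m x) 0 0).
Proof. by rewrite /qf ct_real -!map_mxM mxE. Qed.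

Lemma ip_real n (x y : 'cV[R]_n) : ip (mc x) (mc y) = toC ((x^T *m y) 0 0).
Proof. by rewrite /ip ct_real -!map_mxM mxE. Qed.

Lemma ip_ge0 n (z : 'cV[C]_n) : 0 <= ip z z.
Proof. by rewrite ip_sum; apply: sumr_ge0 => k _; exact: nsq_ge0. Qed.

Lemma decomp_upper n (A : 'M[R]_n) U d (m : R) : decomp A U d ->
  (forall k, d k <= m) -> forall z, qf (mc A) z <= toC m * ip z z.
Proof.
move=> dA dm z; rewrite (decomp_qf _ dA) (decomp_ip _ _ dA) ip_sum mulr_sumr.
by apply: ler_sum => k _; apply: ler_wpM2r; [exact: nsq_ge0 | rewrite lecR].
Qed.

Lemma decomp_lower n (A : 'M[R]_n) U d (m : R) : decomp A U d ->
  (forall k, m <= d k) -> forall z, toC m * ip z z <= qf (mc A) z.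
Proof.
move=> dA dm z; rewrite (decomp_qf _ dA) (decomp_ip _ _ dA) ip_sum mulr_sumr.
by apply: ler_sum => k _; apply: ler_wpM2r; [exact: nsq_ge0 | rewrite lecR].
Qed.

Lemma decomp_normb n (A : 'M[R]_n) U d (m : R) : decomp A U d ->
  (forall k, `|d k| <= m) -> forall z,
  ip (mc A *m z) (mc A *m z) <= toC (m ^+ 2) * ip z z.
Proof.
move=> dA dm z; rewrite (decomp_norm2 _ dA) (decomp_ip _ _ dA) ip_sum mulr_sumr.
apply: ler_sum => k _; apply: ler_wpM2r; first exact: nsq_ge0.
rewrite -rmorphXn lecR -real_normK ?num_real //.
by rewrite lerXn2r ?nnegrE ?(le_trans _ (dm k)).
Qed.

Lemma dot_gt0 n (x : 'cV[R]_n) : x != 0 -> 0 < (x^T *m x) 0 0.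
Proof.
move=> x0.
have [k xk] : exists k, x k 0 != 0.
  apply/existsP; apply: contraNT x0; move/existsPn => H.
  apply/eqP/matrixP => k j; rewrite ord1 mxE; exact/eqP/negPn/H.
rewrite mxE (bigD1 k) //= !mxE -expr2.
apply: (lt_le_trans (_ : 0 < x k 0 ^+ 2)); first by rewrite exprn_even_gt0.
rewrite lerDl; apply: sumr_ge0 => l _; rewrite !mxE -expr2; exact: sqr_ge0.
Qed.

Lemma eig_bound n (F : 'M[R]_n) W f (delta : R) : decomp F W f ->
  (forall x : 'cV[R]_n, `|(x^T *m F *m x) 0 0| <= delta * (x^T *m x) 0 0) ->
  forall k, `|f k| <= delta.
Proof.
move=> dF H k.
have : eigenvalue F (f k).
  rewrite eigenvalue_root_char (decomp_char dF).
  by rewrite /root horner_prod; apply/prodf_eq0; exists k => //; rewrite hornerXsubC subrr.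
case/eigenvalueP => v vF v0.
have := H v^T; rewrite trmxK -mulmxA mulmxA vF -scalemxAl mxE.
have := dot_gt0 (x := v^T); rewrite trmx_eq0 => /(_ v0); rewrite trmxK => p.
by rewrite normrM (gtr0_norm p) ler_pM2r.
Qed.
End Spec.

From mathcomp Require Import all_classical all_reals all_analysis.
Import Order.TTheory GRing.Theory Num.Theory.
Local Open Scope ring_scope.
Local Open Scope classical_set_scope.

Section Main.
Variable R : realType.
Local Notation C := (complex R).
Local Notation toC := (real_complex R).
Local Notation mc M := (map_mx toC M).

Lemma lap_sym n (w : 'M[R]_n) : weight_graph w -> (laplacian w)^T = laplacian w.
Proof.
case=> wT _ _; rewrite /laplacian linearB /= /degree tr_diag_mx; congr (_ - _).
apply/matrixP => i j; rewrite !mxE eq_sym; case: eqP => // _.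
by rewrite -[in RHS]wT mxE.
Qed.

Lemma qformB n (A B : 'M[R]_n) x : qform (A - B) x = qform A x - qform B x.
Proof. rewrite /qform mulmxBr mulmxBl; set M := _ *m A *m x; set N := _ *m B *m x; by rewrite !mxE. Qed.

Lemma qfB n (A B : 'M[C]_n) z : qf (A - B) z = qf A z - qf B z.
Proof. rewrite /qf mulmxBr mulmxBl; set M := _ *m A *m z; set N := _ *m B *m z; by rewrite !mxE. Qed.


Lemma eig_rootP n (A : 'M[R]_n) U d a : decomp A U d ->
  eigenvalue A a <-> exists k, a = d k.
Proof.
move=> dA; rewrite eigenvalue_root_char (decomp_char dA) /root horner_prod.
split.
  by move/prodf_eq0 => [k _]; rewrite hornerXsubC => e; exists k; apply/eqP; rewrite -subr_eq0 e.
by case=> k ->; apply/prodf_eq0; exists k => //; rewrite hornerXsubC subrr.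
Qed.

Lemma spec_radius_facts n (A : 'M[R]_n) U d : decomp A U d ->
  (forall k, `|d k| <= spec_radius A) /\ 0 <= spec_radius A.
Proof.
move=> dA.
set S := [set `|a| | a in [set a : R | eigenvalue A a]].
have ub : ubound S (\sum_k `|d k|).
  move=> y [a /= ea <-]; have [k ->] := (eig_rootP _ dA).1 ea.
  rewrite (bigD1 k) //= lerDl; apply: sumr_ge0 => *; exact: normr_ge0.
have Sk : forall k, S `|d k|.
  by move=> k; exists (d k) => //=; apply/(eig_rootP _ dA); exists k.
have hs : forall k, `|d k| <= spec_radius A.
  move=> k; apply: sup_upper_bound; last exact: Sk.
  by split; [exists `|d k|; exact: Sk | exists (\sum_k `|d k|)].
split => //.
case: n A U d dA S ub Sk hs => [|n] A U d dA S ub Sk hs; last first.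
  exact: le_trans (hs ord0).
rewrite /spec_radius.
suff -> : [set `|a| | a in [set a : R | eigenvalue A a]] = set0 by rewrite sup0.
apply/seteqP; split => // y [a /= ea _].
by move: ea; rewrite /eigenvalue thinmx0 eqxx.
Qed.


Lemma sin_vangle_bound n (x y : 'cV[R]_n) (s : R) : x != 0 -> y != 0 -> 0 <= s ->
  dotv x y ^+ 2 <= dotv x x * dotv y y ->
  (1 - s ^+ 2) * (dotv x x * dotv y y) <= dotv x y ^+ 2 ->
  sin (vangle x y) <= s.
Proof.
move=> x0 y0 s0 h1 h2.
have px : 0 < dotv x x := dot_gt0 x0.
have py : 0 < dotv y y := dot_gt0 y0.
have pxy : 0 < dotv x x * dotv y y by apply: mulr_gt0.
rewrite /vangle /normv.
set c := dotv x y / _.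
have c2 : c ^+ 2 = dotv x y ^+ 2 / (dotv x x * dotv y y).
  by rewrite /c expr_div_n exprMn !sqr_sqrtr // ltW.
have c1 : c ^+ 2 <= 1 by rewrite c2 ler_pdivrMr // mul1r.
have c3 : 1 - s ^+ 2 <= c ^+ 2 by rewrite c2 ler_pdivlMr.
have hc : -1 <= c <= 1 by apply/andP; split; nra.
rewrite sin_acos // -[s]ger0_norm // -sqrtr_sqr; apply: ler_wsqrtr.
lra.
Qed.


Lemma extS n (mu : 'I_n -> R) (k : nat) (h : (k < n)%N) :
  ext_eig mu k.+1 = (mu (Ordinal h))%:E.
Proof.
rewrite /ext_eig /=; case: insubP => [j _ ej|]; last by rewrite h.
by congr (mu _)%:E; apply: val_inj; rewrite ej.
Qed.

Lemma extN n (mu : 'I_n -> R) (k : nat) : (n <= k)%N -> ext_eig mu k.+1 = -oo%E.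
Proof.
move=> h; rewrite /ext_eig /=; case: insubP => [j jn _|//].
by move: jn; rewrite ltnNge h.
Qed.

Lemma dotv_ge0 n (x : 'cV[R]_n) : 0 <= dotv x x.
Proof. by rewrite /dotv mxE; apply: sumr_ge0 => k _; rewrite mxE -expr2 sqr_ge0. Qed.

Lemma ipN n (a : 'cV[C]_n) : ip (- a) (- a) = ip a a.
Proof.
rewrite /ip /ct map_mxN.
have -> : forall m (b : 'cV[C]_m), (- b)^T = - b^T by move=> m b; apply/matrixP => i j; rewrite !mxE.
by rewrite mulNmx mulmxN opprK.
Qed.

Lemma nsq_toC (r : R) : nsq (toC r) = toC (r ^+ 2).
Proof. by rewrite /nsq conj_toC rmorphXn expr2. Qed.


Lemma extP n (mu : 'I_n -> R) (k : nat) (k0 : (0 < k)%N) (h : (k.-1 < n)%N) :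
  ext_eig mu k = (mu (Ordinal h))%:E.
Proof. by case: k k0 h => // k _ h; exact: extS. Qed.

Lemma dot_n1 n (y z : 'cV[R]_n) : n = 1%N -> dotv y z ^+ 2 = dotv y y * dotv z z.
Proof. move=> e; subst n; rewrite /dotv !mxE !big_ord1 !mxE; ring. Qed.


End Main.

Unset Implicit Arguments.
Set Strict Implicit.
Set Printing Implicit Defensive.

Local Notation toC' R := (real_complex R).

Theorem lemma1 (R : realType) (n : nat) (w wh : 'M[R]_n) (eps : R)
  (mu muh : 'I_n -> R) (x xh : 'I_n -> 'cV[R]_n) :
  weight_graph w -> weight_graph wh ->
  0 < eps < 1 ->
  spectral_sparsifier eps w wh ->
  sorted_spectrum (laplacian w) mu ->
  (forall i, x i != 0 /\ laplacian w *m x i = mu i *: x i) ->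
  sorted_spectrum (laplacian wh) muh ->
  (forall i, xh i != 0 /\ laplacian wh *m xh i = muh i *: xh i) ->
  (forall i : 'I_n,
     (`|(mu i)%:E - ext_eig muh i|)%E != 0%E /\
     (`|(mu i)%:E - ext_eig muh i.+2|)%E != 0%E) ->
  spec_norm (laplacian w - laplacian wh) <= eps * spec_radius (laplacian w) /\
  (forall i : 'I_n,
     ((sin (vangle (x i) (xh i)))%:E <=
      (eps * spec_radius (laplacian w))%:E /
        Order.min (`|(mu i)%:E - ext_eig muh i|)%E
                  (`|(mu i)%:E - ext_eig muh i.+2|)%E)%E).
Proof.
move=> wg wgh /andP[e0 e1] sp [sm cm] hx [smh cmh] hxh gaps.
have sL := lap_sym wg; have sLh := lap_sym wgh.
set L := laplacian w in sL sp cm hx *; set Lh := laplacian wh in sLh sp cmh hxh *.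
have sE : (L - Lh)^T = L - Lh by rewrite linearB /= sL sLh.
have [U [d dL]] := decompP sL.
have [V [e dLh]] := decompP sLh.
have [W [f dE]] := decompP sE.
have [drho rho0] := spec_radius_facts dL.
set rho := spec_radius L in drho rho0 *.
set delta := eps * rho.
have delta0 : 0 <= delta by apply: mulr_ge0 => //; exact: ltW.
have qL : forall y, qform L y <= rho * dotv y y.
  move=> y; rewrite -lecR /qform -qf_real rmorphM /= /dotv -ip_real.
  by apply: (decomp_upper dL) => k; apply: le_trans (drho k); exact: ler_norm.
have qE : forall y, `|qform (L - Lh) y| <= delta * dotv y y.
  move=> y; have [s1 s2] := sp y; rewrite qformB.
  apply: (@le_trans _ _ (eps * qform L y)).
    by rewrite ler_norml; apply/andP; split; nra.
  by rewrite /delta -mulrA; apply: ler_wpM2l; [exact: ltW | exact: qL].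
have fb : forall k, `|f k| <= delta := eig_bound dE qE.
have nE : forall z, ip (map_mx (toC' R) (L - Lh) *m z) (map_mx (toC' R) (L - Lh) *m z) <= toC' R (delta ^+ 2) * ip z z.
  exact: decomp_normb dE fb.
have qEu : forall z, qf (map_mx (toC' R) (L - Lh)) z <= toC' R delta * ip z z.
  by apply: (decomp_upper dE) => k; apply: le_trans (fb k); exact: ler_norm.
have qEl : forall z, toC' R (- delta) * ip z z <= qf (map_mx (toC' R) (L - Lh)) z.
  apply: (decomp_lower dE) => k; have := fb k; rewrite ler_norml.
  by case/andP.
have H1 : forall z, qf (map_mx (toC' R) L) z - qf (map_mx (toC' R) Lh) z <= toC' R delta * ip z z.
  by move=> z; rewrite -qfB -map_mxB.
have H2 : forall z, qf (map_mx (toC' R) Lh) z - qf (map_mx (toC' R) L) z <= toC' R delta * ip z z.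
  move=> z; rewrite -opprB -qfB -map_mxB lerNl -mulNr -rmorphN.
  exact: qEl.
have W1 := weyl dL dLh H1 sm smh cm cmh.
have W2 := weyl dLh dL H2 smh sm cmh cm.
split.
  rewrite /spec_norm.
  set S := [set normv ((L - Lh) *m y) | y in [set y : 'cV[R]_n | normv y = 1]].
  have [Sn0|S0] := pselect (S !=set0); last first.
    suff -> : S = set0 by rewrite sup0.
    by apply/seteqP; split => // t St; exfalso; apply: S0; exists t.
  apply: ge_sup => // t [y /= ny <-].
  have dy : dotv y y = 1.
    move: (sqr_sqrtr (dotv_ge0 y)); rewrite /normv in ny; rewrite ny expr1n.
    by move=> <-.
  have hn : dotv ((L - Lh) *m y) ((L - Lh) *m y) <= delta ^+ 2.
    have := nE (map_mx (toC' R) y); rewrite -map_mxM !ip_real -rmorphM lecR.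
    by rewrite -/(dotv y y) dy mulr1.
  rewrite /normv -(ger0_norm delta0) -sqrtr_sqr; exact: ler_wsqrtr.
move=> i.
have [xi0 exi] := hx i; have [xhi0 exhi] := hxh i.
have ez : map_mx (toC' R) L *m map_mx (toC' R) (x i) = toC' R (mu i) *: map_mx (toC' R) (x i).
  by rewrite -map_mxM exi map_mxZ.
have ezh : map_mx (toC' R) Lh *m map_mx (toC' R) (xh i) = toC' R (muh i) *: map_mx (toC' R) (xh i).
  by rewrite -map_mxM exhi map_mxZ.
have hE : ip ((map_mx (toC' R) Lh - map_mx (toC' R) L) *m map_mx (toC' R) (x i))
             ((map_mx (toC' R) Lh - map_mx (toC' R) L) *m map_mx (toC' R) (x i)) <=
          toC' R (delta ^+ 2) * ip (map_mx (toC' R) (x i)) (map_mx (toC' R) (x i)).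
  have -> : (map_mx (toC' R) Lh - map_mx (toC' R) L) *m map_mx (toC' R) (x i) =
            - (map_mx (toC' R) (L - Lh) *m map_mx (toC' R) (x i)).
    by rewrite [in RHS]map_mxB !mulmxBl opprB.
  by rewrite ipN; exact: nE.
have fin : forall g : R, 0 < g ->
    (forall (i0 : (0 < i)%N) (h : (i.-1 < n)%N), g <= `|mu i - muh (Ordinal h)|) ->
    (forall h : (i.+1 < n)%N, g <= `|mu i - muh (Ordinal h)|) ->
    sin (vangle (x i) (xh i)) <= delta / g.
  move=> g g0 glo ghi.
  have [gd|dg] := leP g delta.
    by apply: (le_trans (sin_le1 _)); rewrite ler_pdivlMr // mul1r.
  have gk : forall k, k != i -> g <= `|muh k - mu i|.
    move=> k ki; case: (ltngtP k i) => [ki'|ki'|/val_inj ek]; last by rewrite ek eqxx in ki.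
    - have i0 : (0 < i)%N by apply: leq_ltn_trans ki'.
      have h : (i.-1 < n)%N by apply: leq_ltn_trans (ltn_ord i); apply: leq_pred.
      have := glo i0 h; have := W1 (Ordinal h).
      have := sm (Ordinal h) i (leq_pred _).
      have kj : (k <= i.-1)%N by rewrite -ltnS prednK.
      have := smh k (Ordinal h) kj.
      move=> a b c; rewrite !ler_normr => /orP[] q; apply/orP; left; lra.
    - have h : (i.+1 < n)%N by apply: leq_ltn_trans (ltn_ord k).
      have := ghi h; have := W2 (Ordinal h).
      have := sm i (Ordinal h) (leqnSn _).
      have := smh (Ordinal h) k ki'.
      move=> a b c; rewrite !ler_normr => /orP[] q; apply/orP; right; lra.
  have gi : `|muh i - mu i| <= delta.
    by have := W1 i; have := W2 i; rewrite ler_norml => a b; apply/andP; split; lra.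
  have [D1 D2] := dk_core dLh cmh ez ezh hE delta0 dg gk gi.
  rewrite !ip_real nsq_toC -!rmorphM lecR in D1 D2.
  move: D2; rewrite /= lecR => D2.
  apply: sin_vangle_bound => //; first by rewrite divr_ge0 // ltW.
  have g2 : 0 < g ^+ 2 by rewrite exprn_gt0.
  rewrite -(ler_pM2l g2).
  have -> : g ^+ 2 * ((1 - (delta / g) ^+ 2) * (dotv (x i) (x i) * dotv (xh i) (xh i))) =
     (g ^+ 2 - delta ^+ 2) * dotv (x i) (x i) * dotv (xh i) (xh i).
    by field; rewrite gt_eqF.
  exact: D1.
have gpos : forall j : 'I_n, (`|(mu i)%:E - (muh j)%:E|)%E != 0%E -> 0 < `|mu i - muh j|.
  move=> j hj; rewrite lt_def normr_ge0 andbT; apply: contra hj => /eqP ej.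
  by rewrite -EFinB /= ej.
have [a1 a2] := gaps i.
case: (ltnP 0 i) => i0; case: (ltnP i.+1 n) => h.
- have h1 : (i.-1 < n)%N by apply: leq_ltn_trans (ltn_ord i); apply: leq_pred.
  rewrite (extP muh i0 h1) (extS muh h) in a1 a2 *.
  have p1 := gpos _ a1; have p2 := gpos _ a2.
  rewrite -!EFinB /= -EFin_min inver gt_eqF ?lt_min ?p1 ?p2 // -EFinM lee_fin.
  apply: fin; first by rewrite lt_min p1 p2.
    by move=> i0' h'; rewrite ge_min; apply/orP; left; rewrite (_ : Ordinal h' = Ordinal h1) //; exact: val_inj.
  by move=> h'; rewrite ge_min; apply/orP; right; rewrite (_ : Ordinal h' = Ordinal h) //; exact: val_inj.
- have h1 : (i.-1 < n)%N by apply: leq_ltn_trans (ltn_ord i); apply: leq_pred.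
  rewrite (extP muh i0 h1) (extN muh h) in a1 a2 *.
  have p1 := gpos _ a1.
  have -> : (`|(mu i)%:E - -oo|)%E = +oo%E by [].
  rewrite miney -!EFinB /= inver gt_eqF // -EFinM lee_fin.
  apply: fin => //.
    by move=> i0' h'; rewrite (_ : Ordinal h' = Ordinal h1) //; exact: val_inj.
  by move=> h'; move: h; rewrite leqNgt h'.
- have ei : nat_of_ord i = 0%N by apply/eqP; rewrite -leqn0.
  have h1 : (1 < n)%N by move: h; rewrite ei.
  rewrite ei (extS muh h1).
  move: a2; rewrite ei (extS muh h1) => a2.
  have -> : (`|(mu i)%:E - ext_eig muh 0|)%E = +oo%E by [].
  rewrite minye -!EFinB /= inver gt_eqF ?(gpos _ a2) // -EFinM lee_fin.
  apply: fin; first exact: gpos _ a2.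
    by move=> i0'; move: i0'; rewrite ei.
  by move=> h'; rewrite (_ : Ordinal h' = Ordinal h1) //; apply: val_inj => /=; rewrite ei.
- have ei : nat_of_ord i = 0%N by apply/eqP; rewrite -leqn0.
  have n1 : n = 1%N by have := ltn_ord i; move: h; rewrite ei; lia.
  have hn : (n <= 1)%N by rewrite n1.
  rewrite ei (extN muh hn).
  have -> : (`|(mu i)%:E - ext_eig muh 0|)%E = +oo%E by [].
  have -> : (`|(mu i)%:E - -oo|)%E = +oo%E by [].
  rewrite minye invey mule0 lee_fin.
  apply: sin_vangle_bound => //; first by rewrite dot_n1.
  by rewrite dot_n1 // expr0n /= subr0 mul1r.
Qed.
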